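(* Let $\vec H$ be a DAG with $k$ vertices. Then $\mathrm{dtd}(\vec H)\le\lfloor k/4\rfloor+2$.
   Context: For a DAG $\vec H$, a source is a vertex of in-degree $0$. A DAG elimination forest of a DAG $\vec H$ is defined recursively: if $\vec H$ is empty, it is the empty forest; if the underlying undirected graph of $\vec H$ is disconnected, it is the union of DAG elimination forests (trees) of its connected components; if the underlying graph is connected and $\vec H$ has exactly one source $s$, it is the single-node tree $s$; otherwise (connected, at least two sources) it is a tree whose root is an arbitrarily chosen source $s$ of $\vec H$ and whose subtrees are the trees of a DAG elimination forest of the DAG obtained from $\vec H$ by deleting $s$ and all vertices reachable from $s$. The depth of a rooted forest is the maximum number of nodes on a root-to-leaf path. $\mathrm{dtd}(\vec H)$ is the minimum depth of a DAG elimination forest of $\vec H$. *)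

(* Defs.v *)
From mathcomp Require Import all_boot.
Set Implicit Arguments. Unset Strict Implicit. Unset Printing Implicit Defensive.

(* Rooted trees whose nodes are labelled by vertices. A rooted forest is a
   [seq (etree T)]. *)
Inductive etree (T : Type) := ENode of T & seq (etree T).

Definition eroot T (t : etree T) : T := let: ENode s _ := t in s.

(* depth = maximum number of nodes on a root-to-leaf path *)
Fixpoint tree_depth T (t : etree T) : nat :=
  let: ENode _ ch := t in
  (foldr maxn 0 ((fix aux (l : seq (etree T)) : seq nat :=
      match l with [::] => [::] | t' :: l' => tree_depth t' :: aux l' end) ch)).+1.

Definition forest_depth T (F : seq (etree T)) : nat := foldr maxn 0 (map (@tree_depth T) F).

Section DAG.
Variables (T : finType) (e : rel T).

Definition dag : Prop := forall x y, e x y -> ~~ connect e y x.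

Definition adj (V : {set T}) := [rel x y | [&& x \in V, y \in V & e x y]].
Definition uadj (V : {set T}) := [rel x y | adj V x y || adj V y x].
Definition comp (V : {set T}) (x : T) : {set T} := [set y in V | connect (uadj V) x y].
Definition components (V : {set T}) : {set {set T}} := [set comp V x | x in V].
Definition reach (V : {set T}) (s : T) : {set T} := [set y in V | connect (adj V) s y].
Definition sources (V : {set T}) : {set T} := [set s in V | [forall x in V, ~~ e x s]].

(* F consists of exactly one tree per connected component of V; the tree t
   is associated with the component of its root. *)
Definition forest_cover (V : {set T}) (F : seq (etree T)) : bool :=
  uniq [seq comp V (eroot t) | t <- F] &&
  ([set:: [seq comp V (eroot t) | t <- F]] == components V).

Fixpoint is_elim_tree (C : {set T}) (t : etree T) {struct t} : bool :=
  let: ENode s ch := t in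
  [&& s \in sources C &
      if #|sources C| == 1 then nilp ch
      else
        let C' := C :\: reach C s in
        forest_cover C' ch &&
        (fix aux (l : seq (etree T)) : bool :=
           match l with
           | [::] => true
           | t' :: l' => is_elim_tree (comp C' (eroot t')) t' && aux l'
           end) ch].

(* DAG elimination forest of the sub-DAG induced on V: empty if V is empty;
   one elimination tree per connected component otherwise (a single tree
   when V is connected). *)
Definition is_elim_forest (V : {set T}) (F : seq (etree T)) : bool :=
  forest_cover V F && all (fun t => is_elim_tree (comp V (eroot t)) t) F.

Definition dtd_le (V : {set T}) (d : nat) : Prop :=
  exists F, is_elim_forest V F /\ forest_depth F <= d.

End DAG.

(* Main.v *)
Require Import Defs.
From mathcomp Require Import all_boot zify.
Import Defs.
Set Implicit Arguments. Unset Strict Implicit. Unset Printing Implicit Defensive.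

Definition anc (T : finType) (e : rel T) (C : {set T}) (v : T) : {set T} :=
  [set s in sources e C | connect (adj e C) s v].
Definition multi (T : finType) (e : rel T) (C : {set T}) : {set T} :=
  [set v in C | 1 < #|anc e C v|].
Definition inclosed (T : finType) (e : rel T) (W V : {set T}) : Prop :=
  W \subset V /\ forall x y, x \in V -> y \in W -> e x y -> x \in W.

Lemma adj_sub (T : finType) (e : rel T) (W V : {set T}) x y :
  W \subset V -> adj e W x y -> adj e V x y.
Proof. by move=> /subsetP sWV /and3P[xW yW exy]; rewrite /= !sWV. Qed.

Lemma connect_adj_sub (T : finType) (e : rel T) (W V : {set T}) x y :
  W \subset V -> connect (adj e W) x y -> connect (adj e V) x y.
Proof.
move=> sWV; apply: connect_sub => a b H; apply: connect1; exact: adj_sub H.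
Qed.

Lemma connect_adj_e (T : finType) (e : rel T) (V : {set T}) x y :
  connect (adj e V) x y -> connect e x y.
Proof. apply: connect_sub => a b /and3P[_ _ H]; exact: connect1. Qed.

Lemma inclosed_connect (T : finType) (e : rel T) (W V : {set T}) x y :
  inclosed e W V -> connect (adj e V) x y -> y \in W ->
  x \in W /\ connect (adj e W) x y.
Proof.
move=> [sWV clW] /connectP[p]; elim: p x => [|z p IH] x /=.
  by move=> _ -> yW; split=> //; exact: connect0.
move=> /andP[/and3P[xV zV exz] pp] ey yW.
have [zW czy] := IH z pp ey yW.
have xW : x \in W by exact: clW exz.
split=> //; apply: connect_trans czy; apply: connect1; by rewrite /= xW zW.
Qed.

Lemma sources_inclosed (T : finType) (e : rel T) (W V : {set T}) :
  inclosed e W V -> sources e W = sources e V :&: W.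
Proof.
move=> [sWV clW]; apply/setP => s; rewrite !inE.
apply/idP/idP.
  move=> /andP[sW /forallP H]; rewrite sW (subsetP sWV) //= andbT.
  apply/forallP => x; apply/implyP => xV; apply/negP => exs.
  by have := H x; rewrite (clW _ _ xV sW exs) exs.
move=> /andP[/andP[sV /forallP H] sW]; rewrite sW /=.
apply/forallP => x; apply/implyP => xW.
by have := H x; rewrite (subsetP sWV) .
Qed.

Lemma anc_inclosed (T : finType) (e : rel T) (W V : {set T}) v :
  inclosed e W V -> v \in W -> anc e W v = anc e V v.
Proof.
move=> cl vW; apply/setP => s; rewrite /anc (sources_inclosed cl) !inE.
apply/idP/idP.
  move=> /andP[/andP[-> sW]] c /=; exact: connect_adj_sub (proj1 cl) c.
move=> /andP[sV c]; have [sW c'] := inclosed_connect cl c vW.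
by rewrite sV sW c'.
Qed.

Lemma multi_inclosed (T : finType) (e : rel T) (W V : {set T}) :
  inclosed e W V -> multi e W = multi e V :&: W.
Proof.
move=> cl; apply/setP => v; rewrite !inE.
case vW: (v \in W); last by rewrite andbF.
by rewrite (anc_inclosed cl vW) (subsetP (proj1 cl)) // andbT.
Qed.

Lemma source_exists (T : finType) (e : rel T) (W : {set T}) u :
  dag e -> u \in W -> exists2 s, s \in sources e W & connect (adj e W) s u.
Proof.
move=> dg.
suff H: forall n u, u \in W -> #|[set z in W | connect (adj e W) z u]| <= n ->
  exists2 s, s \in sources e W & connect (adj e W) s u.
  by move=> uW; apply: (H _ u uW (leqnn _)).
elim=> [|n IH] {}u uW.
  by rewrite leqn0 => /eqP/cards0_eq/setP/(_ u); rewrite !inE uW connect0.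
move=> Hc.
case sU: (u \in sources e W); first by exists u => //; exact: connect0.
move: sU; rewrite inE uW /= => /negbT; rewrite negb_forall => /existsP[x].
rewrite negb_imply negbK => /andP[xW exu].
have cxu : connect (adj e W) x u by apply: connect1; rewrite /= xW uW.
have [s Hs csx] : exists2 s, s \in sources e W & connect (adj e W) s x.
  apply: (IH x xW); rewrite -ltnS; apply: leq_trans Hc.
  apply: proper_card; rewrite properE; apply/andP; split.
    apply/subsetP => z; rewrite !inE => /andP[-> c]; exact: connect_trans c cxu.
  apply/subsetPn; exists u; first by rewrite inE uW connect0.
  rewrite inE uW /=; apply/negP => cux.
  by have := dg _ _ exu; rewrite (connect_adj_e cux).
by exists s => //; exact: connect_trans csx cxu.
Qed.

Lemma comp_sym (T : finType) (e : rel T) (V : {set T}) :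
  connect_sym (uadj e V).
Proof. by apply: sym_connect_sym => x y; rewrite /= orbC. Qed.

Lemma comp_sub (T : finType) (e : rel T) (V : {set T}) x : comp e V x \subset V.
Proof. by apply/subsetP => y; rewrite inE => /andP[]. Qed.

Lemma comp_self (T : finType) (e : rel T) (V : {set T}) x : x \in V -> x \in comp e V x.
Proof. by move=> xV; rewrite inE xV connect0. Qed.

Lemma comp_eq (T : finType) (e : rel T) (V : {set T}) x y :
  y \in comp e V x -> comp e V y = comp e V x.
Proof.
rewrite inE => /andP[yV cxy]; apply/setP => z; rewrite !inE.
by rewrite (same_connect (comp_sym e V) cxy).
Qed.

Definition conn (T : finType) (e : rel T) (C : {set T}) : Prop :=
  forall x y, x \in C -> y \in C -> connect (uadj e C) x y.

Lemma uadj_sub_mem (T : finType) (e : rel T) (V : {set T}) a b :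
  uadj e V a b -> (a \in V) && (b \in V).
Proof. by case/orP=> /and3P[-> -> _]. Qed.

Lemma comp_conn (T : finType) (e : rel T) (V : {set T}) x :
  x \in V -> conn e (comp e V x).
Proof.
move=> xV.
set C := comp e V x.
have step : forall p a, a \in C -> path (uadj e V) a p -> connect (uadj e C) a (last a p).
  elim=> [|z p IH] a aC /=; first by move=> _; exact: connect0.
  move=> /andP[uaz pp].
  have zC : z \in C.
    move: aC; rewrite !inE => /andP[_ cxa].
    have /andP[_ ->] := uadj_sub_mem uaz.
    by apply: connect_trans cxa _; apply: connect1.
  apply: connect_trans (IH z zC pp); apply: connect1.
  by move: uaz; rewrite /= aC zC /= => /orP[/and3P[_ _ ->]|/and3P[_ _ ->]]; rewrite ?orbT.
suff H: forall y, y \in C -> connect (uadj e C) x y.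
  move=> y z yC zC; apply: (connect_trans (y:=x)); last exact: H z zC.
  by rewrite comp_sym; apply: H.
move=> y; rewrite inE => /andP[yV /connectP[p pp ->]].
by apply: step => //; exact: comp_self.
Qed.

Lemma node_eq (T : finType) (e : rel T) (C : {set T}) s ch :
  is_elim_tree e C (ENode s ch) =
  (s \in sources e C) && (if #|sources e C| == 1 then nilp ch else
     forest_cover e (C :\: reach e C s) ch &&
     all (fun t => is_elim_tree e (comp e (C :\: reach e C s) (eroot t)) t) ch).
Proof.
rewrite /=; congr (_ && _); case: ifP => // _; congr (_ && _).
Qed.

Lemma depth_eq (T : Type) s (ch : seq (etree T)) :
  tree_depth (ENode s ch) = (forest_depth ch).+1.
Proof. by rewrite /= /forest_depth; congr (_.+1); elim: ch => //= t ch ->. Qed.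

Lemma forest_build (T : finType) (e : rel T) (V : {set T}) d :
  (forall x, x \in V -> exists t, [/\ is_elim_tree e (comp e V x) t,
       eroot t \in comp e V x & tree_depth t <= d]) ->
  exists F, is_elim_forest e V F /\ forest_depth F <= d.
Proof.
move=> H.
have H2 : forall s : seq {set T}, {subset s <= components e V} ->
  exists F, [/\ [seq comp e V (eroot t) | t <- F] = s,
     all (fun t => is_elim_tree e (comp e V (eroot t)) t) F & forest_depth F <= d].
  elim=> [|C s IH] sub; first by exists [::].
  have [F [h1 h2 h3]] := IH (fun y yin => sub y (mem_behead (s:=C :: s) yin)).
  have /imsetP[x xV ->] := sub C (mem_head _ _).
  have [t [t1 t2 t3]] := H x xV.
  exists (t :: F); rewrite /= (comp_eq t2) h1 t1 h2; split=> //.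
  by rewrite /forest_depth /= geq_max t3.
have [F [h1 h2 h3]] := H2 (enum (components e V)) (fun y => ltac:(by rewrite mem_enum)).
exists F; split=> //; rewrite /is_elim_forest h2 andbT /forest_cover h1 enum_uniq /=.
by rewrite set_enum.
Qed.

Definition good_tree (T : finType) (e : rel T) (C : {set T}) d :=
  exists t, [/\ is_elim_tree e C t, eroot t \in C & tree_depth t <= d].

Lemma tree_step (T : finType) (e : rel T) (C : {set T}) s d :
  s \in sources e C ->
  (forall x, x \in C :\: reach e C s -> good_tree e (comp e (C :\: reach e C s) x) d) ->
  good_tree e C d.+1.
Proof.
move=> sS H.
have sC : s \in C by move: sS; rewrite inE => /andP[].
case: (eqVneq #|sources e C| 1) => h1.
  by exists (ENode s [::]); rewrite node_eq sS h1 depth_eq.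
have [F [/andP[c1 c2] c3]] := forest_build H.
by exists (ENode s F); rewrite node_eq sS (negbTE h1) depth_eq c1 c2 ltnS.
Qed.

Lemma single_tree (T : finType) (e : rel T) (C : {set T}) s :
  s \in sources e C -> #|sources e C| = 1 -> good_tree e C 1.
Proof.
move=> sS h1; have sC : s \in C by move: sS; rewrite inE => /andP[].
by exists (ENode s [::]); rewrite node_eq sS h1 depth_eq.
Qed.

Lemma inclosed_reach (T : finType) (e : rel T) (C : {set T}) s :
  inclosed e (C :\: reach e C s) C.
Proof.
split; first exact: subsetDl.
move=> x y xC; rewrite !inE => /andP[nyR yC] exy; rewrite xC andbT.
apply: contra nyR => /andP[_ csx]; rewrite yC /=.
by apply: connect_trans csx _; apply: connect1; rewrite /= xC yC.
Qed.

Lemma inclosed_comp (T : finType) (e : rel T) (V : {set T}) x :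
  inclosed e (comp e V x) V.
Proof.
split; first exact: comp_sub.
move=> u y uV; rewrite !inE => /andP[yV cxy] euy; rewrite uV /=.
apply: connect_trans cxy _; apply: connect1; by rewrite /= uV yV euy orbT.
Qed.

Lemma inclosed_trans (T : finType) (e : rel T) (A B C : {set T}) :
  inclosed e A B -> inclosed e B C -> inclosed e A C.
Proof.
move=> [sAB hA] [sBC hB]; split; first exact: subset_trans sAB sBC.
move=> x y xC yA exy.
exact: (hA x y (hB x y xC (subsetP sAB y yA) exy) yA exy).
Qed.

Lemma child_inclosed (T : finType) (e : rel T) (C : {set T}) s x :
  inclosed e (comp e (C :\: reach e C s) x) C.
Proof. exact: inclosed_trans (inclosed_comp _ _ _) (inclosed_reach _ _ _). Qed.

Lemma child_sub (T : finType) (e : rel T) (C : {set T}) s x :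
  comp e (C :\: reach e C s) x \subset C :\: reach e C s.
Proof. exact: comp_sub. Qed.

Lemma conn_const (T : finType) (e : rel T) (C : {set T}) (X : Type) (f : T -> X) :
  (forall x y, x \in C -> y \in C -> e x y -> f x = f y) ->
  conn e C -> forall x y, x \in C -> y \in C -> f x = f y.
Proof.
move=> H cC x y xC yC; have /connectP[p pp ->] := cC x y xC yC.
elim: p x xC pp {yC} => [|z p IH] x xC //= /andP[uxz pp].
have /andP[_ zC] := uadj_sub_mem uxz.
rewrite -(IH z zC pp); move: uxz => /orP[/and3P[_ _ h]|/and3P[_ _ h]].
  exact: H.
by apply/esym; apply: H.
Qed.

Lemma anc_nonempty (T : finType) (e : rel T) (C : {set T}) v :
  dag e -> v \in C -> exists s, s \in anc e C v.
Proof.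
move=> dg vC; have [s sS csv] := source_exists dg vC.
by exists s; rewrite inE sS csv.
Qed.

Lemma connect_to_source (T : finType) (e : rel T) (C : {set T}) t s :
  s \in sources e C -> connect (adj e C) t s -> t = s.
Proof.
rewrite inE => /andP[sC /forallP H] /connectP[p].
case/lastP: p => [|q z] /=; first by move=> _ ->.
rewrite rcons_path last_rcons => /andP[_ /and3P[aC _ h]] ez; subst z.
by have := H (last t q); rewrite aC h.
Qed.

Lemma anc_source (T : finType) (e : rel T) (C : {set T}) s :
  s \in sources e C -> anc e C s = [set s].
Proof.
move=> sS; apply/setP => t; rewrite !inE.
apply/idP/idP.
  by move=> /andP[_ c]; rewrite (connect_to_source sS c).
by move=> /eqP ->; move: sS; rewrite inE => ->; rewrite connect0.
Qed.

Lemma source_not_multi (T : finType) (e : rel T) (C : {set T}) s :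
  s \in sources e C -> s \notin multi e C.
Proof. by move=> sS; rewrite inE anc_source // cards1 andbF. Qed.

Lemma anc_edge (T : finType) (e : rel T) (C : {set T}) x y :
  x \in C -> y \in C -> e x y -> anc e C x \subset anc e C y.
Proof.
move=> xC yC exy; apply/subsetP => s; rewrite !inE => /andP[-> c] /=.
by apply: connect_trans c _; apply: connect1; rewrite /= xC yC.
Qed.

Lemma anc_reach (T : finType) (e : rel T) (C : {set T}) v s :
  v \in C -> (s \in anc e C v) = (s \in sources e C) && (v \in reach e C s).
Proof. by move=> vC; rewrite !inE vC. Qed.

Definition MM (T : finType) (e : rel T) (C : {set T}) v :=
  [set w in multi e C | [exists s in anc e C v, w \in reach e C s]].

Lemma lemK (T : finType) (e : rel T) (C : {set T}) :
  dag e -> conn e C ->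
  (forall s, s \in sources e C -> #|multi e C :&: reach e C s| <= 1) ->
  #|multi e C| <= 1 /\ (multi e C = set0 -> #|sources e C| <= 1).
Proof.
move=> dg cC Hle.
have multiC : forall w, w \in multi e C -> w \in C by move=> w; rewrite inE => /andP[].
have Mw : forall w, w \in multi e C -> MM e C w = [set w].
  move=> w wM; have wC := multiC w wM.
  have [s0 s0a] := anc_nonempty dg wC.
  apply/setP => z; rewrite /MM in_set in_set1; apply/idP/idP.
    move=> /andP[zM /existsP[s /andP[sa zr]]].
    move: sa; rewrite anc_reach // => /andP[sS wr].
    have /card_le1_eqP Hs := Hle s sS.
    by apply/eqP; apply: Hs; rewrite in_setI ?zM ?zr ?wM ?wr.
  move=> /eqP ->; rewrite wM /=; apply/existsP; exists s0.
  by rewrite s0a /=; move: s0a; rewrite anc_reach // => /andP[].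
have edge : forall x y, x \in C -> y \in C -> e x y ->
    MM e C x = MM e C y /\ (y \notin multi e C -> anc e C x = anc e C y).
  move=> x y xC yC exy.
  have sub := anc_edge xC yC exy.
  have [s0 s0a] := anc_nonempty dg xC.
  case yM: (y \in multi e C); last first.
    have eq : anc e C x = anc e C y.
      apply/eqP; rewrite eqEcard sub /=; move: yM; rewrite inE yC /= => /negbT.
      rewrite -leqNgt => h; apply: leq_trans h _.
      by rewrite card_gt0; apply/set0Pn; exists s0.
    by split=> //; rewrite /MM eq.
  split=> //; rewrite (Mw y yM); apply/setP => z; rewrite /MM in_set in_set1.
  apply/idP/idP.
    move=> /andP[zM /existsP[s /andP[sa zr]]].
    move: (sa); rewrite anc_reach // => /andP[sS _].
    have say : s \in anc e C y by exact: (subsetP sub).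
    move: say; rewrite anc_reach // => /andP[_ yr].
    have /card_le1_eqP Hs := Hle s sS.
    by apply/eqP; apply: Hs; rewrite in_setI ?zM ?zr ?yM ?yr.
  move=> /eqP ->; rewrite yM /=; apply/existsP; exists s0.
  rewrite s0a /=; have := subsetP sub _ s0a; rewrite anc_reach // => /andP[].
  by [].
split.
  apply/card_le1_eqP => w1 w2 w1M w2M.
  have := conn_const (f := MM e C) (fun x y xC yC exy => proj1 (edge x y xC yC exy))
     cC (multiC _ w1M) (multiC _ w2M).
  rewrite !Mw // => /setP/(_ w2); rewrite !inE eqxx => /eqP ->.
  done.
move=> M0; apply/card_le1_eqP => s t sS tS.
have sC : s \in C by move: sS; rewrite inE => /andP[].
have tC : t \in C by move: tS; rewrite inE => /andP[].
have := conn_const (f := anc e C)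
   (fun x y xC yC exy => proj2 (edge x y xC yC exy) ltac:(by rewrite M0 inE))
   cC sC tC.
rewrite !anc_source // => /setP/(_ t); rewrite !inE eqxx => /eqP ->.
done.
Qed.

Lemma good_tree_mono (T : finType) (e : rel T) (C : {set T}) d d' :
  d <= d' -> good_tree e C d -> good_tree e C d'.
Proof. by move=> h [t [t1 t2 t3]]; exists t; split=> //; apply: leq_trans h. Qed.

Lemma child_multi_card (T : finType) (e : rel T) (C : {set T}) s x :
  #|multi e (comp e (C :\: reach e C s) x)| <= #|multi e C| - #|multi e C :&: reach e C s|.
Proof.
rewrite (multi_inclosed (child_inclosed _ _ _ _)) -cardsD; apply: subset_leq_card.
apply/subsetP => z; rewrite !in_setI in_setD => /andP[zM zD].
have := subsetP (child_sub e C s x) _ zD; rewrite in_setD => /andP[h _].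
by rewrite h zM.
Qed.

Lemma child_card (T : finType) (e : rel T) (C : {set T}) s x :
  #|comp e (C :\: reach e C s) x| <= #|C| - #|reach e C s|.
Proof.
have sub : reach e C s \subset C by apply/subsetP => z; rewrite inE => /andP[].
have -> : #|C| - #|reach e C s| = #|C :\: reach e C s|.
  rewrite cardsD (_ : C :&: reach e C s = reach e C s) //; apply/setP => z; rewrite in_setI; case: (boolP (z \in reach e C s)) => h; rewrite ?andbF ?andbT // (subsetP sub z h) //.
apply: subset_leq_card; exact: child_sub.
Qed.

Lemma sources_card_ge1 (T : finType) (e : rel T) (C : {set T}) x :
  dag e -> x \in C -> 0 < #|sources e C|.
Proof.
move=> dg xC; have [s sS _] := source_exists dg xC; by rewrite card_gt0; apply/set0Pn; exists s.
Qed.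

Lemma lemL (T : finType) (e : rel T) :
  dag e -> forall (C : {set T}) x, conn e C -> x \in C ->
  good_tree e C ((#|multi e C| + 1) %/ 2 + 1).
Proof.
move=> dg.
suff H : forall N (C : {set T}) x, #|multi e C| < N -> conn e C -> x \in C ->
  good_tree e C ((#|multi e C| + 1) %/ 2 + 1).
  by move=> C x; apply: (H _ C x (ltnSn _)).
elim=> [|N IH] C x //.
move=> hN cC xC.
have [s0 s0S _] := source_exists dg xC.
case: (eqVneq #|sources e C| 1) => h1.
  by apply: good_tree_mono (single_tree s0S h1); lia.
have hs2 : 1 < #|sources e C|.
  by have := sources_card_ge1 dg xC; move: h1; lia.
set mu := #|multi e C|.
have [s sS [r1 r2]] : exists2 s, s \in sources e C &
    (0 < #|multi e C :&: reach e C s| /\ (1 < #|multi e C :&: reach e C s| \/ mu <= 1)).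
  case: (boolP [exists s in sources e C, 1 < #|multi e C :&: reach e C s|]).
    move=> /existsP[s /andP[sS h]]; exists s => //; split; [lia | by left].
  rewrite negb_exists => /forallP Hn.
  have [K1 K2] : #|multi e C| <= 1 /\ (multi e C = set0 -> #|sources e C| <= 1).
    apply: lemK => // s sS; have := Hn s; rewrite sS /=; lia.
  have : multi e C != set0 by apply/eqP => /K2; lia.
  case/set0Pn => w wM.
  have wC : w \in C by move: wM; rewrite inE => /andP[].
  have [s sa] := anc_nonempty dg wC.
  move: (sa); rewrite anc_reach // => /andP[sS wr].
  exists s => //; split; last by right.
  by rewrite card_gt0; apply/set0Pn; exists w; rewrite in_setI wM wr.
have -> : (mu + 1) %/ 2 + 1 = ((mu + 1) %/ 2).+1 by rewrite addn1.
apply: (tree_step sS) => y yC'.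
set D := comp e (C :\: reach e C s) y.
have hD := child_multi_card e C s y.
have cD : conn e D by apply: comp_conn.
have yD : y \in D by apply: comp_self.
have := IH D y _ cD yD.
rewrite -/D in hD; move=> IHD.
have hsub : #|multi e C :&: reach e C s| <= mu by apply: subset_leq_card; exact: subsetIl.
apply: good_tree_mono (IHD _); rewrite -/mu in hD *.
  case: r2 => r2; lia.
rewrite -/mu in hN; lia.
Qed.

Lemma card_sep (T : finType) (A : {set T}) (P : pred T) :
  #|[set x in A | P x]| = \sum_(x in A) (P x : nat).
Proof.
rewrite -sum1_card (eq_bigl (fun x => (x \in A) && P x)); last by move=> x; rewrite inE.
by rewrite big_mkcondr /=; apply: eq_bigr => x _; case: (P x).
Qed.

Lemma double_count (T : finType) (e : rel T) (C : {set T}) :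
  (forall s, s \in sources e C -> #|reach e C s| <= 3) ->
  #|multi e C| <= #|sources e C|.
Proof.
move=> H3.
have h1 : 2 * #|multi e C| <= \sum_(w in multi e C) #|anc e C w|.
  rewrite mulnC -sum_nat_const; apply: leq_sum => w; rewrite inE => /andP[_].
  by [].
have h2 : \sum_(w in multi e C) #|anc e C w| =
    \sum_(s in sources e C) \sum_(w in multi e C) (connect (adj e C) s w : nat).
  rewrite exchange_big /=; apply: eq_bigr => w _; rewrite /anc card_sep.
  by [].
have h3 : forall s, s \in sources e C ->
    \sum_(w in multi e C) (connect (adj e C) s w : nat) <= 2.
  move=> s sS; rewrite -card_sep.
  have sub : [set w in multi e C | connect (adj e C) s w] \subset reach e C s :\ s.
    apply/subsetP => w; rewrite !inE => /andP[/andP[wC hw] c]; rewrite wC c !andbT.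
    apply/eqP => ews; subst w.
    by move: hw; rewrite anc_source // cards1.
  apply: leq_trans (subset_leq_card sub) _.
  have sR : s \in reach e C s.
    by move: sS; rewrite !inE => /andP[-> _]; rewrite connect0.
  have := cardsD1 s (reach e C s); rewrite sR; have := H3 s sS; lia.
have h4 : \sum_(s in sources e C) \sum_(w in multi e C) (connect (adj e C) s w : nat)
    <= \sum_(s in sources e C) 2 by apply: leq_sum.
move: h4; rewrite sum_nat_const -h2; lia.
Qed.

Lemma multi_sources_card (T : finType) (e : rel T) (C : {set T}) :
  #|multi e C| + #|sources e C| <= #|C|.
Proof.
have dis : multi e C :&: sources e C = set0.
  apply/setP => z; rewrite in_setI in_set0; apply/negP => /andP[zM zS].
  by move: (source_not_multi zS); rewrite zM.
have := cardsU (multi e C) (sources e C); rewrite dis cards0 subn0 => <-.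
apply: subset_leq_card; apply/subsetP => z; rewrite in_setU => /orP[];
  rewrite inE => /andP[] //.
Qed.

Lemma mainL (T : finType) (e : rel T) :
  dag e -> forall (C : {set T}) x, conn e C -> x \in C ->
  good_tree e C (#|C| %/ 4 + 2).
Proof.
move=> dg.
suff H : forall N (C : {set T}) x, #|C| < N -> conn e C -> x \in C ->
  good_tree e C (#|C| %/ 4 + 2).
  by move=> C x; apply: (H _ C x (ltnSn _)).
elim=> [|N IH] C x //.
move=> hN cC xC.
case: (boolP [exists s in sources e C, 3 < #|reach e C s|]).
  move=> /existsP[s /andP[sS hr]].
  have hRC : #|reach e C s| <= #|C|.
    by apply: subset_leq_card; apply/subsetP => z; rewrite inE => /andP[].
  have -> : #|C| %/ 4 + 2 = (#|C| %/ 4 + 1).+1 by rewrite addn1 addn2.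
  apply: (tree_step sS) => y yC'.
  set D := comp e (C :\: reach e C s) y.
  have hD := child_card e C s y.
  have cD : conn e D by apply: comp_conn.
  have yD : y \in D by apply: comp_self.
  rewrite -/D in hD.
  apply: good_tree_mono (IH D y _ cD yD); lia.
rewrite negb_exists => /forallP Hn.
have H3 : forall s, s \in sources e C -> #|reach e C s| <= 3.
  by move=> s sS; have := Hn s; rewrite sS /=; lia.
have := double_count H3; have := multi_sources_card e C => ha hb.
apply: good_tree_mono (lemL dg cC xC); lia.
Qed.

Theorem mainTheorem9 (T : finType) (e : rel T) (k : nat) :
  dag e -> #|T| = k -> dtd_le e [set: T] (k %/ 4 + 2).
Proof.
move=> dg hk.
have [F [h1 h2]] : exists F, is_elim_forest e [set: T] F /\ forest_depth F <= k %/ 4 + 2.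
  apply: forest_build => x xV.
  have [t [t1 t2 t3]] := mainL dg (comp_conn (e:=e) xV) (comp_self e xV).
  exists t; split=> //; apply: leq_trans t3 _.
  rewrite -hk leq_add2r; apply: leq_div2r.
  by rewrite -cardsT; apply: subset_leq_card; apply: subsetT.
by exists F.
Qed.
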